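(* If a regular facets-pairing structure $\mathcal{F}$ on the cube $\mathcal{C}^n$ is perfect, then $\mathcal{F}$ is strong.
   Context: Let $[\pm n]=\{\pm1,\dots,\pm n\}$ and $\mathcal{C}^n=\{x\in\mathbb{R}^n: -\tfrac14\le x_i\le\tfrac14\}$. For $1\le i\le n$, $\mathbf{F}(i)$ and $\mathbf{F}(-i)$ denote the facets of $\mathcal{C}^n$ in $\{x_i=\tfrac14\}$ and $\{x_i=-\tfrac14\}$; for $j_1,\dots,j_s\in[\pm n]$ with distinct absolute values, $\mathbf{F}(j_1,\dots,j_s)=\bigcap_i\mathbf{F}(j_i)$ (every proper face has this form). A signed permutation is a bijection $\sigma$ of $[\pm n]$ with $\sigma(-k)=-\sigma(k)$. A facets-pairing structure on $\mathcal{C}^n$ is a pair $(\omega,\{\tau_j\})$ where $\omega$ is a bijection of $[\pm n]$ with $\omega\circ\omega=\mathrm{id}$ and $\tau_j:\mathbf{F}(j)\to\mathbf{F}(\omega(j))$ are face-preserving homeomorphisms with $\tau_{\omega(j)}=\tau_j^{-1}$, such that for all $|j|\ne|k|$, writing $\tau_j(\mathbf{F}(j,k))=\mathbf{F}(\omega(j),k')$ and $\tau_k(\mathbf{F}(j,k))=\mathbf{F}(j',\omega(k))$, one has $\tau_{k'}\tau_j(p)=\tau_{j'}\tau_k(p)$ for all $p\in\mathbf{F}(j,k)$. It is regular if each $\tau_j$ is a Euclidean isometry and $\omega$ is a signed permutation. A composition $\tau_{k_m}\circ\dots\circ\tau_{k_1}$ applied to a proper face $f$ is valid if $f\subset\mathbf{F}(k_1)$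 and $\tau_{k_i}\circ\dots\circ\tau_{k_1}(f)\subset\mathbf{F}(k_{i+1})$ for $1\le i<m$ ($m=0$ allowed, giving the identity). The face family $\widehat f$ is the set of faces $\tau_{k_m}\circ\dots\circ\tau_{k_1}(f)$ over all valid compositions. $\mathcal{F}$ is perfect if for every proper face $f$ of codimension $s$, $\widehat f$ has exactly $2^s$ elements. For a proper face $f$ let $\Xi(f)$ be the set of facets containing $f$. If $f\subset\mathbf{F}(k)$ and $f'=\tau_k(f)$, define the bijection $\Psi^f_k:\Xi(f)\to\Xi(f')$ by $\Psi^f_k(\mathbf{F}(k))=\mathbf{F}(\omega(k))$ and, for $F'\in\Xi(f)\setminus\{\mathbf{F}(k)\}$, $\Psi^f_k(F')$ is the facet $G$ with $G\cap\mathbf{F}(\omega(k))=\tau_k(F'\cap\mathbf{F}(k))$. $\mathcal{F}$ is strong if for every proper face $f$ and any two valid compositions $\tau_{k_m}\circ\dots\circ\tau_{k_1}$ and $\tau_{k'_r}\circ\dots\circ\tau_{k'_1}$ mapping $f$ onto the same face $\widetilde f$: (a) they agree at every point of $f$; and (b) the composites $\Psi^{f_m}_{k_m}\circ\dots\circ\Psi^{f_1}_{k_1}$ and $\Psi^{f'_r}_{k'_r}\circ\dots\circ\Psi^{f'_1}_{k'_1}$ coincide as maps $\Xi(f)\to\Xi(\widetilde f)$, where $f_1=f'_1=f$, $f_{i+1}=\tau_{k_i}\circ\dots\circ\tau_{k_1}(f)$, $f'_{i+1}=\tau_{k'_i}\circ\dots\circ\tau_{k'_1}(f)$. *)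

(* Defs.v *)
(* Points of R^n are row vectors 'rV[R]_n over an arbitrary
   real field R (the paper's R^n is the instance R = reals). *)
From HB Require Import structures.
From mathcomp Require Import all_boot all_order all_algebra.
Set Implicit Arguments. Unset Strict Implicit. Unset Printing Implicit Defensive.
Import Order.TTheory GRing.Theory Num.Theory.
Local Open Scope ring_scope.

Section Cube.
Variables (R : realFieldType) (n : nat).

(* signed indices [±n]: (i, true) stands for +(i+1), (i, false) for -(i+1) *)
Definition sidx := ('I_n * bool)%type.
Definition point := 'rV[R]_n.
Definition negs (j : sidx) : sidx := (j.1, ~~ j.2).
Definition quarter : R := (4%:R)^-1.
Definition sgnval (j : sidx) : R := if j.2 then quarter else - quarter.

Definition cube (x : point) : Prop := forall i : 'I_n, - quarter <= x ord0 i <= quarter.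
Definition facet (j : sidx) (x : point) : Prop := cube x /\ x ord0 j.1 = sgnval j.
(* a label {j_1,...,j_s}, s >= 1, with distinct absolute values: a proper face *)
Definition valid_label (S : {set sidx}) : Prop :=
  S != set0 /\ forall a b, a \in S -> b \in S -> a.1 = b.1 -> a = b.
Definition face (S : {set sidx}) (x : point) : Prop :=
  cube x /\ forall j, j \in S -> x ord0 j.1 = sgnval j.

Definition seteq (P Q : point -> Prop) : Prop := forall x, P x <-> Q x.
Definition subsetP (P Q : point -> Prop) : Prop := forall x, P x -> Q x.
Definition image (f : point -> point) (P : point -> Prop) (y : point) : Prop :=
  exists x, P x /\ y = f x.
Definition dist2 (x y : point) : R := \sum_(i < n) (x ord0 i - y ord0 i) ^+ 2.

Section Structure.
Variables (omega : sidx -> sidx) (tau : sidx -> point -> point).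

Definition facets_pairing : Prop :=
  (forall j, omega (omega j) = j)
  /\ (forall j x, facet j x -> facet (omega j) (tau j x))
  /\ (forall j x, facet j x -> tau (omega j) (tau j x) = x)
  (* tau_j is continuous on F(j) (its inverse tau_{omega j} likewise): homeomorphism *)
  /\ (forall j x, facet j x -> forall e : R, 0 < e -> exists2 d : R, 0 < d &
        forall y, facet j y -> dist2 x y < d -> dist2 (tau j x) (tau j y) < e)
  /\ (forall j S, valid_label S -> subsetP (face S) (facet j) ->
        exists2 T, valid_label T & seteq (image (tau j) (face S)) (face T))
  /\ (forall j k k' j', j.1 != k.1 -> (omega j).1 != k'.1 -> j'.1 != (omega k).1 ->
        seteq (image (tau j) (face [set j; k])) (face [set omega j; k']) ->
        seteq (image (tau k) (face [set j; k])) (face [set j'; omega k]) ->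
        forall p, face [set j; k] p -> tau k' (tau j p) = tau j' (tau k p)).

Definition regular : Prop :=
  (forall j x y, facet j x -> facet j y -> dist2 (tau j x) (tau j y) = dist2 x y)
  /\ bijective omega /\ (forall k, omega (negs k) = negs (omega k)).

(* valid composition tau_{k_m} o ... o tau_{k_1} (ks = [k_1; ...; k_m]) on P *)
Fixpoint valid_comp (ks : seq sidx) (P : point -> Prop) : Prop :=
  match ks with
  | [::] => True
  | k :: ks' => subsetP P (facet k) /\ valid_comp ks' (image (tau k) P)
  end.
Definition img_comp (ks : seq sidx) (P : point -> Prop) : point -> Prop :=
  foldl (fun Q k => image (tau k) Q) P ks.
Definition apply_comp (ks : seq sidx) (x : point) : point :=
  foldl (fun y k => tau k y) x ks.

(* the face family of F(S), as labels *)
Definition in_family (S T : {set sidx}) : Prop :=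
  valid_label T /\
  exists ks, valid_comp ks (face S) /\ seteq (img_comp ks (face S)) (face T).

Definition perfect : Prop :=
  forall S, valid_label S ->
    exists A : {set {set sidx}},
      (forall T, T \in A <-> in_family S T) /\ #|A| = (2 ^ #|S|)%N.

(* Psi_k(F(j)) = F(g); facets are identified with their signed index *)
Definition Psi (k j g : sidx) : Prop :=
  if j == k then g = omega k
  else seteq (fun x => facet g x /\ facet (omega k) x)
             (image (tau k) (face [set j; k])).

Fixpoint PsiPath (ks : seq sidx) (j g : sidx) : Prop :=
  match ks with
  | [::] => j = g
  | k :: ks' => exists g1, Psi k j g1 /\ PsiPath ks' g1 g
  end.

Definition strong : Prop :=
  forall S T ks ks', valid_label S -> valid_label T ->
    valid_comp ks (face S) -> valid_comp ks' (face S) ->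
    seteq (img_comp ks (face S)) (face T) ->
    seteq (img_comp ks' (face S)) (face T) ->
    (forall x, face S x -> apply_comp ks x = apply_comp ks' x) /\
    (forall j g, j \in S -> (PsiPath ks j g <-> PsiPath ks' j g)).

End Structure.
End Cube.

(* Main.v *)
Require Import Defs.
From HB Require Import structures.
From mathcomp Require Import all_boot all_order all_algebra.
From Stdlib Require Import ClassicalEpsilon FunctionalExtensionality.
Set Implicit Arguments. Unset Strict Implicit. Unset Printing Implicit Defensive.
Import Order.TTheory GRing.Theory Num.Theory.
Local Open Scope ring_scope.

Notation psub := Defs.subsetP.
Section Geo.
Variables (R : realFieldType) (n : nat).
Local Notation fc := (@face R n).
Local Notation ft := (@facet R n).

Lemma quarter_gt0 : 0 < quarter R.
Proof. by rewrite /quarter invr_gt0 ltr0n. Qed.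

Lemma sgnval_neq0 (j : sidx n) : sgnval R j != 0.
Proof.
rewrite /sgnval; case: j.2; first by rewrite gt_eqF // quarter_gt0.
by rewrite oppr_eq0 gt_eqF // quarter_gt0.
Qed.

Lemma sgnval_opp (a b : sidx n) : a.1 = b.1 -> a != b -> sgnval R a = - sgnval R b.
Proof.
case: a b => [i x] [j y] /= -> ne; rewrite /sgnval /=.
by case: x y ne => [] [] //=; rewrite ?opprK // eqxx.
Qed.

Lemma sgnval_bnd (j : sidx n) : - quarter R <= sgnval R j <= quarter R.
Proof.
have q0 := quarter_gt0; rewrite /sgnval; case: j.2; rewrite lexx ?andbT //.
  by rewrite (le_trans _ (ltW q0)) // oppr_le0 ltW.
by rewrite (le_trans (ltW _) (ltW q0)) // oppr_lt0.
Qed.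

Definition cpt (T : {set sidx n}) : point R n :=
  \row_(i < n) match [pick t in T | t.1 == i] with Some t => sgnval R t | None => 0 end.

Lemma cpt_face (T : {set sidx n}) : valid_label T -> fc T (cpt T).
Proof.
move=> [_ vT]; split.
  move=> i; rewrite mxE; case: pickP => [t _|_]; first exact: sgnval_bnd.
  by rewrite oppr_le0 ltW ?quarter_gt0.
move=> j jT; rewrite mxE; case: pickP => [t /andP[tT /eqP e]|H].
  by rewrite (vT t j tT jT e).
by move: (H j); rewrite jT eqxx.
Qed.

Lemma face_nonempty (T : {set sidx n}) : valid_label T -> exists x : point R n, fc T x.
Proof. by move=> v; exists (cpt T); apply: cpt_face. Qed.

Lemma face_sub (T U : {set sidx n}) : valid_label T -> psub (fc T) (fc U) -> U \subset T.
Proof.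
move=> vT H; apply/subsetP => u uU; apply/negPn/negP => uT.
have [_ /(_ u uU)] := H _ (cpt_face vT).
rewrite mxE; case: pickP => [t /andP[tT /eqP e]|_].
  have ne : t != u by apply: contraNneq uT => <-.
  rewrite (sgnval_opp e ne) => /eqP; rewrite eq_sym -subr_eq0 opprK -mulr2n mulrn_eq0 /=.
  by rewrite (negPf (sgnval_neq0 _)).
by move=> /esym/eqP; rewrite (negPf (sgnval_neq0 _)).
Qed.

Lemma face_eq (T U : {set sidx n}) : valid_label T -> valid_label U -> seteq (fc T) (fc U) -> T = U.
Proof.
move=> vT vU H; apply/eqP; rewrite eqEsubset; apply/andP; split.
  by apply: face_sub vU _ => x /H.
by apply: face_sub vT _ => x /H.
Qed.

Lemma facet_face1 (j : sidx n) (x : point R n) : ft j x <-> fc [set j] x.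
Proof.
split; first by move=> [c e]; split => // k; rewrite inE => /eqP->.
by move=> [c e]; split => //; apply: e; rewrite inE.
Qed.

Lemma facet_face2 (a b : sidx n) (x : point R n) : (ft a x /\ ft b x) <-> fc [set a; b] x.
Proof.
split; first by move=> [[c e1] [_ e2]]; split => // k; rewrite !inE => /orP[]/eqP->.
by move=> [c e]; split; split => //; apply: e; rewrite !inE eqxx ?orbT.
Qed.

Lemma valid2 (a b : sidx n) : a.1 != b.1 -> valid_label [set a; b].
Proof.
move=> ne; split; first by apply/set0Pn; exists a; rewrite !inE eqxx.
move=> x y; rewrite !inE => /orP[]/eqP-> /orP[]/eqP-> //= e; by rewrite e eqxx in ne.
Qed.

Lemma valid_sub (T U : {set sidx n}) : valid_label T -> U \subset T -> U != set0 -> valid_label U.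
Proof. by move=> [_ vT] /subsetP sub ne; split => // a b /sub aT /sub bT; apply: vT. Qed.

Lemma face_mono (T U : {set sidx n}) : U \subset T -> psub (fc T) (fc U).
Proof. by move=> /subsetP s x [c e]; split => // j /s; apply: e. Qed.

End Geo.

Local Close Scope ring_scope.
Section Parity.
Variables (A : eqType) (St : Type) (step : A -> St -> St) (Inv : St -> Prop) (P : pred A).
Hypotheses (stepI : forall a s, P a -> Inv s -> Inv (step a s))
 (stepK : forall a s, P a -> Inv s -> step a (step a s) = s)
 (stepC : forall a b s, P a -> P b -> Inv s -> step a (step b s) = step b (step a s)).

Fixpoint run (w : seq A) s := match w with [::] => s | a :: w' => run w' (step a s) end.

Lemma runI w s : all P w -> Inv s -> Inv (run w s).
Proof. by elim: w s => //= a w IH s /andP[Pa Pw] Is; apply: IH => //; apply: stepI. Qed.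

Lemma run_cat u v s : run (u ++ v) s = run v (run u s).
Proof. by elim: u s => //= a u IH s. Qed.

Lemma run_move u a v s : all P (u ++ a :: v) -> Inv s -> run (u ++ a :: v) s = run (a :: u ++ v) s.
Proof.
elim: u s => //= b u IH s; rewrite all_cat /= => /and3P[Pb Pu /andP[Pa Pv]] Is.
rewrite IH /=; last by apply: stepI.
  by rewrite stepC.
by rewrite all_cat Pu /= Pa Pv.
Qed.

Lemma run_perm w w' s : all P w -> perm_eq w w' -> Inv s -> run w s = run w' s.
Proof.
elim: w w' s => [|a w IH] w' s.
  by move=> _; rewrite perm_sym => /perm_nilP ->.
move=> /= /andP[Pa Pw] pe Is.
have aw : a \in w' by rewrite -(perm_mem pe) mem_head.
have [u [v E]] : exists u v, w' = u ++ a :: v.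
  exists (take (index a w') w'), (drop (index a w').+1 w').
  by rewrite -{1}(cat_take_drop (index a w') w') (drop_nth a) ?index_mem // nth_index.
rewrite E in pe *.
have Pw' : all P (u ++ a :: v) by rewrite -(perm_all _ pe) /= Pa Pw.
rewrite run_move //=.
apply: IH => //; last by apply: stepI.
by rewrite -(perm_cons a); apply: (perm_trans pe); rewrite -cat1s perm_catCA.
Qed.

Lemma reduce w a s : all P w -> 1 < count_mem a w -> Inv s ->
  exists w'', [/\ run w s = run w'' s, size w'' < size w, all P w'' &
    forall b, odd (count_mem b w'') = odd (count_mem b w)].
Proof.
move=> Pw c Is.
have aw : a \in w by rewrite -has_pred1 has_count; apply: ltn_trans c.
have pe1 := perm_to_rem aw.
have aw' : a \in rem a w.
  apply/count_memPn => c0; move/permP: pe1 => /(_ (pred1 a)) /=.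
  by rewrite c0 eqxx => E; rewrite E in c.
have pe2 := perm_to_rem aw'.
have pe : perm_eq w [:: a, a & rem a (rem a w)].
  by apply: (perm_trans pe1); rewrite perm_cons.
have Pall : all P [:: a, a & rem a (rem a w)] by rewrite -(perm_all _ pe).
move: (Pall) => /= /and3P[Pa _ Pr].
exists (rem a (rem a w)); split => //.
- by rewrite (run_perm Pw pe Is) /= stepK.
- by rewrite (perm_size pe).
- move=> b; move/permP: pe => /(_ (pred1 b)) /= ->.
  by rewrite addnA addnn oddD odd_double.
Qed.

Lemma run_canon w s : all P w -> Inv s ->
  exists w0, [/\ uniq w0, forall a, (a \in w0) = odd (count_mem a w), all P w0 & run w s = run w0 s].
Proof.
move: {2}(size w) (leqnn (size w)) => N; elim: N w s => [|N IH] w s.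
  by rewrite leqn0 => /nilP -> _ _; exists [::].
move=> sz Pw Is.
case: (boolP (has (fun a => 1 < count_mem a w) w)) => [/hasP [a _ c]|].
  have [w'' [E sz' Pw'' cnt]] := reduce Pw c Is.
  have [w0 [u0 m0 P0 E0]] := IH w'' s (ltnSE (leq_trans sz' sz)) Pw'' Is.
  by exists w0; split => //; [move=> b; rewrite m0 cnt | rewrite E].
move/hasPn => H.
have cm : forall x, count_mem x w = (x \in w).
  move=> x; case: (boolP (x \in w)) => xw.
    have := H x xw; rewrite -leqNgt => c1; apply/eqP; rewrite eqn_leq c1 /=.
    by rewrite -has_pred1 has_count in xw.
  exact/count_memPn.
exists w; split => //; first exact: count_mem_uniq.
by move=> a; rewrite cm; case: (a \in w).
Qed.

Lemma run_par w w' s : all P w -> all P w' ->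
  (forall a, odd (count_mem a w) = odd (count_mem a w')) -> Inv s -> run w s = run w' s.
Proof.
move=> Pw Pw' c Is.
have [w0 [u0 m0 P0 ->]] := run_canon Pw Is.
have [w1 [u1 m1 P1 ->]] := run_canon Pw' Is.
apply: run_perm => //; apply: uniq_perm => // a; by rewrite m0 m1 c.
Qed.

End Parity.
Local Open Scope ring_scope.

Section Struct.
Variables (R : realFieldType) (n : nat).
Local Notation fc := (@face R n).
Local Notation ft := (@facet R n).
Variables (omega : sidx n -> sidx n) (tau : sidx n -> point R n -> point R n).
Hypothesis FP : facets_pairing omega tau.
Local Notation img := (@Defs.image R n).

Lemma om_inv j : omega (omega j) = j.
Proof. by case: FP => H _; apply: H. Qed.
Lemma tau_f j x : ft j x -> ft (omega j) (tau j x).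
Proof. by case: FP => _ [H _]; apply: H. Qed.
Lemma tau_inv j x : ft j x -> tau (omega j) (tau j x) = x.
Proof. by case: FP => _ [_ [H _]]; apply: H. Qed.
Lemma face_pres j (S : {set sidx n}) : valid_label S -> psub (fc S) (ft j) ->
  exists2 T, valid_label T & seteq (img (tau j) (fc S)) (fc T).
Proof. by case: FP => _ [_ [_ [_ [H _]]]]; apply: H. Qed.
Lemma cycle_cond j k k' j' : j.1 != k.1 -> (omega j).1 != k'.1 -> j'.1 != (omega k).1 ->
        seteq (img (tau j) (fc [set j; k])) (fc [set omega j; k']) ->
        seteq (img (tau k) (fc [set j; k])) (fc [set j'; omega k]) ->
        forall p, fc [set j; k] p -> tau k' (tau j p) = tau j' (tau k p).
Proof. by case: FP => _ [_ [_ [_ [_ H]]]]; apply: H. Qed.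

Lemma img_seteq f P Q : seteq P Q -> seteq (img f P) (img f Q).
Proof. by move=> H y; split => -[x [/H Px ->]]; exists x. Qed.
Lemma img_sub k P : psub P (ft k) -> psub (img (tau k) P) (ft (omega k)).
Proof. by move=> H y [x [/H Px ->]]; apply: tau_f. Qed.
Lemma img_img k P : psub P (ft k) -> seteq (img (tau (omega k)) (img (tau k) P)) P.
Proof.
move=> H y; split.
  by move=> [z [[x [Px ->]] ->]]; rewrite tau_inv //; apply: H.
by move=> Py; exists (tau k y); split; [exists y | rewrite tau_inv //; apply: H].
Qed.
Lemma img_mono f P Q : psub P Q -> psub (img f P) (img f Q).
Proof. by move=> H y [x [/H Qx ->]]; exists x. Qed.
Lemma ft_img k : psub (ft k) (img (tau (omega k)) (ft (omega k))).
Proof. by move=> y Fy; exists (tau k y); split; [apply: tau_f | rewrite tau_inv]. Qed.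

Lemma fc1 (j : sidx n) : seteq (ft j) (fc [set j]).
Proof. by move=> x; apply: facet_face1. Qed.

Lemma valid1 (j : sidx n) : valid_label [set j].
Proof.
split; first by apply/set0Pn; exists j; rewrite inE.
by move=> a b; rewrite !inE => /eqP-> /eqP->.
Qed.

Lemma in_sub_ft (S : {set sidx n}) k : k \in S -> psub (fc S) (ft k).
Proof. by move=> kS x /(face_mono (T:=S) (U:=[set k])); rewrite sub1set => /(_ kS) /fc1. Qed.

Lemma sub_ft_in (S : {set sidx n}) k : valid_label S -> psub (fc S) (ft k) -> k \in S.
Proof. by move=> vS H; rewrite -sub1set; apply: face_sub vS _ => x /H /fc1. Qed.

Lemma FI (S : {set sidx n}) k : valid_label S -> k \in S ->
  exists T, [/\ valid_label T, omega k \in T, seteq (img (tau k) (fc S)) (fc T) &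
      seteq (img (tau (omega k)) (fc T)) (fc S)].
Proof.
move=> vS kS; have sk := in_sub_ft kS.
have [T vT e] := face_pres vS sk.
exists T; split => //.
  by apply: sub_ft_in vT _ => x /e; apply: img_sub.
move=> x; have H1 := img_img sk x; have H2 := img_seteq (tau (omega k)) (fun y => iff_sym (e y)) x.
tauto.
Qed.

Lemma C2 k m : m.1 != k.1 -> exists g, g.1 != (omega k).1 /\
  seteq (img (tau k) (fc [set m; k])) (fc [set omega k; g]).
Proof.
move=> ne; have vmk := valid2 ne; have kin : k \in [set m; k] by rewrite !inE eqxx orbT.
have [T [vT okT e1 e2]] := FI vmk kin.
have : T != [set omega k].
  apply/eqP => TE; move: e2; rewrite TE => e2.
  have : [set m; k] \subset [set k].
    apply: face_sub (valid1 _) _ => x /fc1 /ft_img [y [Fy ->]].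
    by apply/e2; exists y; split => //; apply/fc1.
  by rewrite subUset sub1set inE => /andP[/eqP mk _]; rewrite mk eqxx in ne.
move=> Tne.
have [g gT gne] : exists2 g, g \in T & g != omega k.
  apply/exists_inP; apply: contraNT Tne => /exists_inPn H; apply/eqP/setP => x.
  rewrite inE; apply/idP/idP => [xT|/eqP->//]; by move: (H x xT); rewrite negbK.
have g1 : g.1 != (omega k).1.
  by apply: contraNneq gne => E; apply/eqP; case: vT => _ /(_ g (omega k) gT okT E).
have vg : valid_label [set omega k; g] by apply: valid2; rewrite eq_sym.
have okin : omega k \in [set omega k; g] by rewrite !inE eqxx.
have [U [vU kU e3 e4]] := FI vg okin.
rewrite om_inv in kU e4.
have TU : psub (fc T) (fc [set omega k; g]) by apply: face_mono; rewrite subUset !sub1set okT gT.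
have UM : U \subset [set m; k].
  apply: face_sub vmk _ => x /e2 /(img_mono TU) /e3; done.
exists g; split => //.
case mU : (m \in U).
  have UE : U = [set m; k].
    apply/eqP; rewrite eqEsubset UM subUset !sub1set mU kU //.
  by rewrite -UE.
have UE : U = [set k].
  apply/eqP; rewrite eqEsubset sub1set kU andbT; apply/subsetP => x xU.
  move/subsetP: UM => /(_ x xU); rewrite !inE => /orP[/eqP xm|->//].
  by rewrite -xm xU in mU.
move: e4; rewrite UE => e4.
have : [set omega k; g] \subset [set omega k].
  apply: face_sub (valid1 _) _ => x /fc1 Fx.
  have := ft_img Fx; rewrite om_inv => -[y [Fy ->]].
  by apply/e4; exists y; split => //; apply/fc1.
by rewrite subUset !sub1set !inE => /andP[_ /eqP gE]; rewrite gE eqxx in gne.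
Qed.


Lemma sg_self_opp (a : sidx n) : sgnval R a != - sgnval R a.
Proof.
apply/eqP => /eqP; rewrite -subr_eq0 opprK -mulr2n mulrn_eq0 /=.
by rewrite (negPf (sgnval_neq0 _ _)).
Qed.

Local Notation Psi := (@Psi R n omega tau).

Lemma Psi_char m k g : m.1 != k.1 -> (Psi k m g <->
  g.1 != (omega k).1 /\ seteq (img (tau k) (fc [set m; k])) (fc [set omega k; g])).
Proof.
move=> ne; rewrite /Psi; have -> : (m == k) = false.
  by apply/negbTE; apply: contraNneq ne => ->.
split; last first.
  move=> [g1 e] x; split.
    by move/facet_face2; rewrite setUC => /e.
  by move/e; rewrite setUC => /facet_face2.
move=> H; have [g0 [g01 e0]] := C2 ne.
have Hg : seteq (fc [set g; omega k]) (fc [set omega k; g0]).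
  move=> x; split.
    by move/facet_face2/H/e0.
  by move/e0/H/facet_face2.
have v0 : valid_label [set omega k; g0] by apply: valid2; rewrite eq_sym.
case: (eqVneq g.1 (omega k).1) => E.
  case: (eqVneq g (omega k)) => gE.
    move: Hg; rewrite gE setUid => /(face_eq (valid1 _) v0) /setP /(_ g0).
    rewrite !inE eqxx orbT => /eqP g0E.
    by rewrite g0E eqxx in g01.
  have [_ Hc] := proj2 (Hg (cpt R [set omega k; g0])) (@cpt_face R n _ v0).
  have hg : cpt R [set omega k; g0] ord0 g.1 = sgnval R g by apply: Hc; rewrite !inE eqxx.
  have hk : cpt R [set omega k; g0] ord0 (omega k).1 = sgnval R (omega k).
    by apply: Hc; rewrite !inE eqxx orbT.
  move: hg; rewrite E hk (@sgnval_opp R n _ _ E gE) => /eqP.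
  by rewrite (negPf (sg_self_opp _)).
have vg : valid_label [set g; omega k] by apply: valid2.
move/(face_eq vg v0): Hg => /setP /(_ g); rewrite !inE eqxx /= => /esym /orP[/eqP gE|/eqP->].
  by rewrite gE eqxx in E.
by split => //; move=> x; split => [/e0|/e0].
Qed.

Definition Psif k m : sidx n := epsilon (inhabits m) (fun g => Psi k m g).

Lemma Psif_spec k m : m.1 != k.1 -> (Psif k m).1 != (omega k).1 /\
  seteq (img (tau k) (fc [set m; k])) (fc [set omega k; Psif k m]).
Proof.
move=> ne; apply/(Psi_char _ ne); apply: epsilon_spec.
have [g H] := C2 ne; exists g; exact/(Psi_char _ ne).
Qed.

Lemma Psif_uniq k m g : m.1 != k.1 -> g.1 != (omega k).1 ->
  seteq (img (tau k) (fc [set m; k])) (fc [set omega k; g]) -> Psif k m = g.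
Proof.
move=> ne g1 e; have [p1 e'] := Psif_spec ne.
have v1 : valid_label [set omega k; Psif k m] by apply: valid2; rewrite eq_sym.
have v2 : valid_label [set omega k; g] by apply: valid2; rewrite eq_sym.
have : seteq (fc [set omega k; Psif k m]) (fc [set omega k; g]).
  move=> x; split => [/e'/e|/e/e'] //.
move/(face_eq v1 v2)/setP/(_ (Psif k m)); rewrite !inE eqxx orbT => /esym/orP[/eqP E|/eqP//].
by rewrite E eqxx in p1.
Qed.

Lemma Psif_kk k : Psif k k = omega k.
Proof.
have : Psi k k (Psif k k) by apply: epsilon_spec; exists (omega k); rewrite /Psi eqxx.
by rewrite /Psi eqxx.
Qed.

Lemma Psi_eq m k g : (m = k \/ m.1 != k.1) -> (Psi k m g <-> g = Psif k m).
Proof.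
case=> [->|ne]; first by rewrite Psif_kk /Psi eqxx.
split => [H|->]; last by apply/(Psi_char _ ne); apply: Psif_spec.
have [g1 e] := proj1 (Psi_char _ ne) H.
by rewrite (Psif_uniq ne g1 e).
Qed.

Lemma Psif_inv k m : (m = k \/ m.1 != k.1) -> Psif (omega k) (Psif k m) = m.
Proof.
case=> [->|ne]; first by rewrite !Psif_kk om_inv.
have [g1 e] := Psif_spec ne.
apply: Psif_uniq; first by [].
  by rewrite om_inv.
have sk : psub (fc [set m; k]) (ft k) by apply: in_sub_ft; rewrite !inE eqxx orbT.
move=> x; rewrite om_inv setUC; split.
  move=> /(img_seteq (tau (omega k)) (fun y => iff_sym (e y))) /(img_img sk).
  by rewrite setUC.
move=> h; apply/(img_seteq (tau (omega k)) (fun y => iff_sym (e y))).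
by apply/(img_img sk); rewrite setUC.
Qed.


Lemma inL_cond (L : {set sidx n}) k m : valid_label L -> k \in L -> m \in L ->
  m = k \/ m.1 != k.1.
Proof.
move=> [_ vL] kL mL; case: (eqVneq m.1 k.1) => E; last by right.
by left; apply: vL.
Qed.

Lemma LT (L : {set sidx n}) k : valid_label L -> k \in L ->
  [/\ valid_label (Psif k @: L), {in L &, injective (Psif k)} &
      seteq (img (tau k) (fc L)) (fc (Psif k @: L))].
Proof.
move=> vL kL.
have inj : {in L &, injective (Psif k)}.
  move=> a b aL bL E.
  by rewrite -(Psif_inv (inL_cond vL kL aL)) E (Psif_inv (inL_cond vL kL bL)).
have [T [vT okT e1 e2]] := FI vL kL.
suff -> : Psif k @: L = T by [].
apply/eqP; rewrite eqEsubset; apply/andP; split.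
  apply/subsetP => t /imsetP [m mL ->].
  case: (inL_cond vL kL mL) => [->|ne]; first by rewrite Psif_kk.
  have [p1 e] := Psif_spec ne.
  have : [set omega k; Psif k m] \subset T.
    apply: face_sub vT _ => x /e1 H.
    apply/e; apply: img_mono H; apply: face_mono; by rewrite subUset !sub1set mL kL.
  by move/subsetP => /(_ (Psif k m)); rewrite !inE eqxx orbT; apply.
apply/subsetP => t tT.
case: (eqVneq t (omega k)) => [->|tne]; first by rewrite -Psif_kk imset_f.
have t1 : t.1 != (omega k).1.
  by apply: contraNneq tne => E; apply/eqP; case: vT => _ /(_ t (omega k) tT okT E).
have [p1 e] := Psif_spec t1; rewrite om_inv in p1 e.
have mL : Psif (omega k) t \in L.
  have : [set k; Psif (omega k) t] \subset L.
    apply: face_sub vL _ => x /e2 H.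
    apply/e; apply: img_mono H; apply: face_mono; by rewrite subUset !sub1set tT okT.
  by move/subsetP => /(_ (Psif (omega k) t)); rewrite !inE eqxx orbT; apply.
apply/imsetP; exists (Psif (omega k) t) => //.
have := Psif_inv (k := omega k) (or_intror t1); rewrite om_inv => ->.
done.
Qed.


Lemma P_comm j k : j.1 != k.1 -> forall p, fc [set j; k] p ->
  tau (Psif k j) (tau k p) = tau (Psif j k) (tau j p).
Proof.
move=> ne p Hp.
have [a1 ea] := Psif_spec ne.
have ne' : k.1 != j.1 by rewrite eq_sym.
have [b1 eb] := Psif_spec ne'.
apply: (cycle_cond (j:=k) (k:=j)) => //.
- by rewrite eq_sym.
- by move=> x; rewrite setUC; apply: ea.
- by move=> x; rewrite (setUC [set Psif j k]); apply: eb.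
- by rewrite setUC.
Qed.

Lemma img2 (f g f' g' : point R n -> point R n) P :
  (forall p, P p -> f (g p) = f' (g' p)) -> seteq (img f (img g P)) (img f' (img g' P)).
Proof.
move=> H y; split.
  by move=> [z [[x [Px ->]] ->]]; exists (g' x); split; [exists x | rewrite H].
by move=> [z [[x [Px ->]] ->]]; exists (g x); split; [exists x | rewrite H].
Qed.

Lemma no_cross j k : j.1 != k.1 -> Psif k j != Psif j k.
Proof.
move=> ne; apply/eqP => E.
have [a1 ea] := Psif_spec ne.
have ne' : k.1 != j.1 by rewrite eq_sym.
have [b1 eb] := Psif_spec ne'.
have Heq : forall p, fc [set j; k] p -> tau k p = tau j p.
  move=> p Hp.
  have Fk : ft (Psif k j) (tau k p).
    have : fc [set omega k; Psif k j] (tau k p) by apply/ea; exists p.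
    by move/facet_face2 => [].
  have Fj : ft (Psif k j) (tau j p).
    have : fc [set omega j; Psif j k] (tau j p) by apply/eb; exists p; rewrite setUC.
    by rewrite -E => /facet_face2 [].
  by rewrite -(tau_inv Fk) -(tau_inv Fj) (P_comm ne Hp) E.
have v1 : valid_label [set omega k; Psif k j] by apply: valid2; rewrite eq_sym.
have v2 : valid_label [set omega j; Psif j k] by apply: valid2; rewrite eq_sym.
have : seteq (fc [set omega k; Psif k j]) (fc [set omega j; Psif j k]).
  move=> x; split.
    move/ea => [p [Hp ->]]; rewrite Heq //; apply/eb; exists p; split => //.
    by rewrite setUC.
  move/eb => [p [Hp ->]]; rewrite setUC in Hp; rewrite -Heq //; apply/ea; exists p; split => //.
move/(face_eq v1 v2)/setP/(_ (omega k)); rewrite !inE eqxx /= -E.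
move/esym/orP => [] /eqP E2.
  by move: ne; rewrite -{1}(om_inv j) -E2 om_inv eqxx.
by rewrite -E2 eqxx in a1.
Qed.


Lemma valid_ne1 (M : {set sidx n}) j k : valid_label M -> j \in M -> k \in M -> j != k -> j.1 != k.1.
Proof. by move=> [_ vM] jM kM; apply: contra_neq => E; apply: vM. Qed.

Lemma DI_eq (M : {set sidx n}) j k : valid_label M -> j \in M -> k \in M -> j != k ->
  [/\ {in M &, injective (fun e => Psif (Psif k j) (Psif k e))},
      {in M &, injective (fun e => Psif (Psif j k) (Psif j e))} &
      [set Psif (Psif k j) (Psif k e) | e in M] = [set Psif (Psif j k) (Psif j e) | e in M]].
Proof.
move=> vM jM kM jk; have ne := valid_ne1 vM jM kM jk.
have [v1 i1 e1] := LT vM kM.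
have k2in : Psif k j \in Psif k @: M by apply: imset_f.
have [v2 i2 e2] := LT v1 k2in.
have [v1' i1' e1'] := LT vM jM.
have j2in : Psif j k \in Psif j @: M by apply: imset_f.
have [v2' i2' e2'] := LT v1' j2in.
split.
- by move=> a b aM bM /= E; apply: i1 => //; apply: i2 => //; apply: imset_f.
- by move=> a b aM bM /= E; apply: i1' => //; apply: i2' => //; apply: imset_f.
have -> : [set Psif (Psif k j) (Psif k e) | e in M] = Psif (Psif k j) @: (Psif k @: M).
  by rewrite -imset_comp.
have -> : [set Psif (Psif j k) (Psif j e) | e in M] = Psif (Psif j k) @: (Psif j @: M).
  by rewrite -imset_comp.
apply: face_eq => // x.
have sub : psub (fc M) (fc [set j; k]) by apply: face_mono; rewrite subUset !sub1set jM kM.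
have H := img2 (P := fc M) (fun p Hp => P_comm ne (sub p Hp)).
have A1 := img_seteq (tau (Psif k j)) e1 x.
have A2 := img_seteq (tau (Psif j k)) e1' x.
have := e2 x; have := e2' x; have := H x; tauto.
Qed.

Lemma D_comm (M : {set sidx n}) j k e : valid_label M -> j \in M -> k \in M -> j != k ->
  e \in M -> Psif (Psif k j) (Psif k e) = Psif (Psif j k) (Psif j e).
Proof.
move=> vM jM kM jk eM; have ne := valid_ne1 vM jM kM jk.
set fk := fun e => Psif (Psif k j) (Psif k e).
set fj := fun e => Psif (Psif j k) (Psif j e).
have v0 : valid_label [set j; k] by apply: valid2.
have j0 : j \in [set j; k] by rewrite !inE eqxx.
have k0 : k \in [set j; k] by rewrite !inE eqxx orbT.
have [ik0 ij0 E0] := DI_eq v0 j0 k0 jk.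
have fkj : fk j = fj j.
  have : fk j \in [set fj e | e in [set j; k]] by rewrite -E0; apply: imset_f.
  case/imsetP => e'; rewrite !inE => /orP[]/eqP-> // E.
  exfalso; move: E; rewrite /fk /fj !Psif_kk => /(congr1 omega); rewrite !om_inv => E.
  by move: (no_cross ne); rewrite E eqxx.
have fkk : fk k = fj k.
  have : fk k \in [set fj e | e in [set j; k]] by rewrite -E0; apply: imset_f.
  case/imsetP => e'; rewrite !inE => /orP[]/eqP-> // E.
  by move: jk; rewrite -fkj in E; rewrite (ik0 _ _ k0 j0 E) eqxx.
have vM' : valid_label [set j; k; e].
  apply: valid_sub vM _ _; first by rewrite !subUset !sub1set jM kM eM.
  by apply/set0Pn; exists j; rewrite !inE eqxx.
have j1 : j \in [set j; k; e] by rewrite !inE eqxx.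
have k1 : k \in [set j; k; e] by rewrite !inE eqxx orbT.
have e1 : e \in [set j; k; e] by rewrite !inE eqxx !orbT.
have [ik1 ij1 E1] := DI_eq vM' j1 k1 jk.
have : fk e \in [set fj e | e in [set j; k; e]] by rewrite -E1; apply: imset_f.
case/imsetP => e'; rewrite !inE => /orP[/orP[/eqP->|/eqP->]|/eqP->//] E.
  by rewrite -fkj in E; rewrite (ik1 _ _ e1 j1 E).
by rewrite -fkk in E; rewrite (ik1 _ _ e1 k1 E).
Qed.


Section Fixed.
Variable S : {set sidx n}.
Hypothesis vS : valid_label S.

Definition stepd a (d : sidx n -> sidx n) : sidx n -> sidx n :=
  fun m => if m \in S then Psif (d a) (d m) else d m.
Definition St := ((sidx n -> sidx n) * point R n)%type.
Definition stepS a (s : St) : St := (stepd a s.1, tau (s.1 a) s.2).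
Definition InvS (s : St) : Prop :=
  [/\ {in S &, injective s.1}, valid_label (s.1 @: S) & fc (s.1 @: S) s.2].

Lemma stepd_in a d m : m \in S -> stepd a d m = Psif (d a) (d m).
Proof. by rewrite /stepd => ->. Qed.
Lemma stepd_out a d m : m \notin S -> stepd a d m = d m.
Proof. by rewrite /stepd => /negPf ->. Qed.

Lemma stepd_img a d : a \in S -> stepd a d @: S = Psif (d a) @: (d @: S).
Proof.
move=> aS; rewrite -imset_comp; apply: eq_in_imset => m mS.
by rewrite /stepd mS.
Qed.

Lemma stepS_I a s : a \in S -> InvS s -> InvS (stepS a s).
Proof.
case: s => d x aS; rewrite /InvS /= => -[inj vL Fx].
have kL : d a \in d @: S by apply: imset_f.
have [v1 i1 e1] := LT vL kL.
rewrite /InvS /= stepd_img //; split => //.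
  move=> m1 m2 m1S m2S; rewrite /stepd m1S m2S => E.
  by apply: inj => //; apply: i1 => //; apply: imset_f.
by apply/e1; exists x.
Qed.

Lemma stepS_K a s : a \in S -> InvS s -> stepS a (stepS a s) = s.
Proof.
case: s => d x aS; rewrite /InvS /= => -[inj vL Fx].
have kL : d a \in d @: S by apply: imset_f.
have sda : stepd a d a = omega (d a) by rewrite stepd_in // Psif_kk.
rewrite /stepS /= sda tau_inv; last by apply: (in_sub_ft kL).
congr pair; apply: functional_extensionality => m.
case: (boolP (m \in S)) => mS; last by rewrite !stepd_out.
rewrite !stepd_in // Psif_kk Psif_inv //.
by apply: inL_cond vL kL _; apply: imset_f.
Qed.

Lemma stepS_C a b s : a \in S -> b \in S -> InvS s -> stepS a (stepS b s) = stepS b (stepS a s).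
Proof.
case: s => d x aS bS; rewrite /InvS /= => -[inj vL Fx].
case: (eqVneq a b) => [->//|ab].
have kL : d a \in d @: S by apply: imset_f.
have jL : d b \in d @: S by apply: imset_f.
have jk : d b != d a by apply: contraNneq ab => /inj E; rewrite E.
have ne := valid_ne1 vL jL kL jk.
rewrite /stepS /= !stepd_in //; congr pair.
  apply: functional_extensionality => m.
  case: (boolP (m \in S)) => mS; last by rewrite !stepd_out.
  rewrite !stepd_in //.
  first [ apply: (D_comm vL jL kL jk) | symmetry; apply: (D_comm vL jL kL jk) ]; by apply: imset_f.
have Hp : fc [set d b; d a] x by apply: face_mono Fx; rewrite subUset !sub1set jL kL.
first [ exact: (P_comm ne Hp) | exact: (esym (P_comm ne Hp)) ].
Qed.

Definition runS := run stepS.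

Lemma runS_I w s : all (mem S) w -> InvS s -> InvS (runS w s).
Proof. by apply: runI => a s' /= aS; apply: stepS_I. Qed.

Lemma runS_par w w' s : all (mem S) w -> all (mem S) w' ->
  (forall a, odd (count_mem a w) = odd (count_mem a w')) -> InvS s -> runS w s = runS w' s.
Proof.
apply: run_par.
- by move=> a s' /= aS; apply: stepS_I.
- by move=> a s' /= aS; apply: stepS_K.
- by move=> a b s' /= aS bS; apply: stepS_C.
Qed.

Fixpoint ksw (w : seq (sidx n)) (d : sidx n -> sidx n) : seq (sidx n) :=
  match w with [::] => [::] | a :: w' => d a :: ksw w' (stepd a d) end.

Lemma runS_fst w d x y : (runS w (d, x)).1 = (runS w (d, y)).1.
Proof. by elim: w d x y => //= a w IH d x y; apply: IH. Qed.

Lemma apply_ksw w d x : apply_comp tau (ksw w d) x = (runS w (d, x)).2.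
Proof. by elim: w d x => //= a w IH d x; rewrite -IH. Qed.


Lemma path_word ks (s : St) P : InvS s -> seteq P (fc (s.1 @: S)) -> valid_comp tau ks P ->
  exists w, [/\ all (mem S) w, ks = ksw w s.1 &
    seteq (img_comp tau ks P) (fc ((runS w s).1 @: S))].
Proof.
elim: ks s P => [|k ks IH] s P Is eP /=; first by move=> _; exists [::].
move=> [Pk vc]; case: s Is eP => d x Is eP; case: (Is) => /= inj vL Fx.
have : k \in d @: S by apply: sub_ft_in vL _ => y /eP /Pk.
case/imsetP => a aS Ek; subst k.
have Is' := stepS_I aS Is.
have [v1 i1 e1] := LT vL (imset_f d aS).
have eP' : seteq (img (tau (d a)) P) (fc ((stepS a (d, x)).1 @: S)).
  rewrite /= stepd_img // => y.
  have := img_seteq (tau (d a)) eP y; have := e1 y; tauto.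
have [w [Pw E e]] := IH _ _ Is' eP' vc.
by exists (a :: w); split => //=; [rewrite aS | rewrite E].
Qed.

Lemma word_valid w (s : St) P : all (mem S) w -> InvS s -> seteq P (fc (s.1 @: S)) ->
  valid_comp tau (ksw w s.1) P /\
  seteq (img_comp tau (ksw w s.1) P) (fc ((runS w s).1 @: S)).
Proof.
elim: w s P => [|a w IH] s P /=; first by [].
case: s => d x /andP[aS Pw] Is eP; case: (Is) => /= inj vL Fx.
have Is' := stepS_I aS Is.
have kL : d a \in d @: S by apply: imset_f.
have [v1 i1 e1] := LT vL kL.
have eP' : seteq (img (tau (d a)) P) (fc ((stepS a (d, x)).1 @: S)).
  rewrite /= stepd_img // => y.
  have := img_seteq (tau (d a)) eP y; have := e1 y; tauto.
have [H1 H2] := IH _ _ Pw Is' eP'.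
split => //; split => //.
by move=> y /eP; apply: in_sub_ft.
Qed.

Lemma PsiPath_ksw w (s : St) m g : all (mem S) w -> InvS s -> m \in S ->
  (PsiPath omega tau (ksw w s.1) (s.1 m) g <-> g = (runS w s).1 m).
Proof.
elim: w s => [|a w IH] s /=.
  by move=> _ _ _; split => ->.
case: s => d x /andP[aS Pw] Is mS; case: (Is) => /= inj vL Fx.
have Is' := stepS_I aS Is.
have kL : d a \in d @: S by apply: imset_f.
have mL : d m \in d @: S by apply: imset_f.
have HP := IH (stepS a (d, x)) Pw Is' mS; rewrite /= stepd_in // in HP.
split.
  move=> [g1 [H1 H2]]; move/(Psi_eq _ (inL_cond vL kL mL)): H1 => E; subst g1.
  exact/HP.
move=> E; exists (Psif (d a) (d m)); split; first exact/(Psi_eq _ (inL_cond vL kL mL)).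
exact/HP.
Qed.

Definition s0 (x : point R n) : St := ((fun m => m), x).

Lemma s0_img : (s0 (cpt R S)).1 @: S = S.
Proof. exact: imset_id. Qed.

Lemma Is0 x : fc S x -> InvS (s0 x).
Proof. by move=> Fx; rewrite /InvS /= imset_id; split. Qed.

Definition par (w : seq (sidx n)) := [set a | odd (count_mem a w)].

Lemma par_sub w : all (mem S) w -> par w \subset S.
Proof.
move=> /allP Pw; apply/subsetP => a; rewrite inE => c.
apply: Pw; rewrite -has_pred1 has_count; by case: (count _ _) c.
Qed.

Lemma runs_enum w s : all (mem S) w -> InvS s -> runS w s = runS (enum (par w)) s.
Proof.
move=> Pw Is; apply: runS_par => //.
  apply/allP => a; rewrite mem_enum => aP; have := par_sub Pw.
  by move/subsetP => /(_ a aP).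
by move=> a; rewrite (@count_uniq_mem _ (enum (par w))) ?enum_uniq // mem_enum inE oddb.
Qed.

Definition labf (p : {set sidx n}) := (runS (enum p) (s0 (cpt R S))).1 @: S.

Lemma strong_S (HP : perfect tau) T ks ks' :
  valid_label T -> valid_comp tau ks (fc S) -> valid_comp tau ks' (fc S) ->
  seteq (img_comp tau ks (fc S)) (fc T) -> seteq (img_comp tau ks' (fc S)) (fc T) ->
  (forall x, fc S x -> apply_comp tau ks x = apply_comp tau ks' x) /\
  (forall j g, j \in S -> (PsiPath omega tau ks j g <-> PsiPath omega tau ks' j g)).
Proof.
move=> vT vc vc' e e'.
set x0 := cpt R S.
have F0 : fc S x0 by apply: cpt_face.
have I0 := Is0 F0.
have eS : seteq (fc S) (fc ((s0 x0).1 @: S)) by rewrite s0_img.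
have getw : forall ks1 (U : {set sidx n}), valid_label U -> valid_comp tau ks1 (fc S) ->
    seteq (img_comp tau ks1 (fc S)) (fc U) ->
    exists w, [/\ all (mem S) w, ks1 = ksw w (fun m => m) & U = labf (par w)].
  move=> ks1 U vU vc1 e1.
  have [w [Pw E ew]] := path_word I0 eS vc1.
  exists w; split => //.
  have Iw := runS_I Pw I0; case: (Iw) => _ vW _.
  rewrite /labf -runs_enum //; apply: face_eq => // y.
  have := e1 y; have := ew y; tauto.
have [w [Pw Ew Tw]] := getw _ _ vT vc e.
have [w' [Pw' Ew' Tw']] := getw _ _ vT vc' e'.
have [A [HA cA]] := HP S vS.
have Aeq : A = labf @: powerset S.
  apply/setP => U; apply/idP/idP.
    move/HA => [vU [ks1 [vc1 e1]]].
    have [w1 [Pw1 _ ->]] := getw _ _ vU vc1 e1.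
    by apply: imset_f; rewrite powersetE par_sub.
  case/imsetP => p; rewrite powersetE => pS ->; apply/HA.
  have Pp : all (mem S) (enum p).
    by apply/allP => a; rewrite mem_enum => ap; move/subsetP: pS => /(_ a ap).
  have Ip := runS_I Pp I0; case: (Ip) => _ vp _.
  split => //; exists (ksw (enum p) (s0 x0).1).
  by apply: (word_valid Pp I0 eS).
have inj : {in powerset S &, injective labf}.
  by apply/imset_injP; rewrite -Aeq cA card_powerset.
have Epar : par w = par w'.
  by apply: inj; rewrite ?powersetE ?par_sub // -Tw -Tw'.
have Erun : forall x, fc S x -> runS w (s0 x) = runS w' (s0 x).
  move=> x Fx; have Ix := Is0 Fx.
  by rewrite (runs_enum Pw Ix) (runs_enum Pw' Ix) Epar.
split.
  move=> x Fx; rewrite Ew Ew' !apply_ksw.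
  by have := Erun x Fx; rewrite /s0 => ->.
move=> j g jS.
have H1 := PsiPath_ksw g Pw I0 jS; have H2 := PsiPath_ksw g Pw' I0 jS.
rewrite /= in H1 H2; rewrite Ew Ew' H1 H2 (Erun _ F0) //.
Qed.

End Fixed.

Lemma strong_main : perfect tau -> strong omega tau.
Proof.
move=> HP S T ks ks' vS vT vc vc' e e'.
exact: (strong_S vS HP vT vc vc' e e').
Qed.


End Struct.

Theorem mainTheorem4 (R : realFieldType) (n : nat)
  (omega : sidx n -> sidx n) (tau : sidx n -> point R n -> point R n) :
  facets_pairing omega tau -> regular omega tau -> perfect tau ->
  strong omega tau.
Proof.
move=> FP _ HP; exact: (strong_main FP HP).
Qed.
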